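(* Let $\mathfrak g=\bigoplus_{p\in I}V_p$ and $S=\bigcup_{p\in I}S_p$ be a resonant decomposition (so that $\mathfrak G_R=\bigoplus_p S_p\otimes V_p$ is a resonant subalgebra of $S\otimes\mathfrak g$), and let $|T_{A_1}\cdots T_{A_n}|$ be an invariant tensor for $\mathfrak g$. Denote by $\{T_{a_p}\}$ a basis of $V_p$. (i) For arbitrary constants $\alpha_\gamma$, the components $$|T_{(a_{p_1},\alpha_{p_1})}\cdots T_{(a_{p_n},\alpha_{p_n})}|=\alpha_\gamma K_{\alpha_{p_1}\cdots\alpha_{p_n}}{}^{\gamma}|T_{a_{p_1}}\cdots T_{a_{p_n}}|,\qquad \lambda_{\alpha_{p_k}}\in S_{p_k},$$ form an invariant tensor for $\mathfrak G_R$. (ii) If moreover $S$ has a zero element $\lambda_{N+1}=0_S$ with nonzero elements $\lambda_i$, $i=0,\dots,N$, then for arbitrary constants $\alpha_j$ the components $|T_{(a_{p_1},i_{p_1})}\cdots T_{(a_{p_n},i_{p_n})}|=\sum_{j=0}^N\alpha_jK_{i_{p_1}\cdots i_{p_n}}{}^{j}|T_{a_{p_1}}\cdots T_{a_{p_n}}|$, with $\lambda_{i_{p_k}}\in S_{p_k}$ nonzero, form an invariant tensor for the $0_S$-forced algebra of $\mathfrak G_R$.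
   Context: A semigroup is a set with closed associative multiplication; $S$ is finite and abelian; $0_S$ satisfies $0_S\lambda=\lambda0_S=0_S$. For subsets, $S_p\times S_q=\{\lambda_\alpha\lambda_\beta:\lambda_\alpha\in S_p,\lambda_\beta\in S_q\}$. The decomposition is resonant if there are $i_{(p,q)}\subset I$ with $[V_p,V_q]\subset\bigoplus_{r\in i_{(p,q)}}V_r$ and $S_p\times S_q\subset\bigcap_{r\in i_{(p,q)}}S_r$. The $n$-selector $K_{\alpha_1\cdots\alpha_n}{}^{\gamma}$ equals $1$ if $\lambda_{\alpha_1}\cdots\lambda_{\alpha_n}=\lambda_\gamma$, $0$ otherwise. $S\otimes\mathfrak g$ has basis $T_{(A,\alpha)}=\lambda_\alpha T_A$, grading $\mathfrak q(A)$, bracket $[T_{(A,\alpha)},T_{(B,\beta)}]=K_{\alpha\beta}{}^{\gamma}C_{AB}{}^CT_{(C,\gamma)}$; $\mathfrak G_R$ is spanned by $\lambda_\alpha T_{a_p}$ with $\lambda_\alpha\in S_p$. The $0_S$-forced algebra of $\mathfrak G_R$ has basis $T_{(a_p,i)}$ with $\lambda_i\in S_p$ nonzero and bracket $[T_{(a_p,i)},T_{(b_q,j)}]=\sum_{k=0}^NK_{ij}{}^kC_{a_pb_q}{}^{c_r}T_{(c_r,k)}$. Invariance of a rank-$n$ tensor on a Lie superalgebra with structure constants $C_{AB}{}^C$ means $\sum_{p=1}^{n}(-1)^{\mathfrak q(A_0)(\mathfrak q(A_1)+\cdots+\mathfrak q(A_{p-1}))}C_{A_0A_p}{}^{B}|T_{A_1}\cdots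 T_{A_{p-1}}T_BT_{A_{p+1}}\cdots T_{A_n}|=0$ for all indices. *)

(* Defs.v *)
From HB Require Import structures.
From mathcomp Require Import all_boot all_order all_algebra.
Set Implicit Arguments. Unset Strict Implicit. Unset Printing Implicit Defensive.
Import GRing.Theory.
Local Open Scope ring_scope.

(* A (super)algebra is presented by a finite basis type X, a Z2-grading
   [grade : X -> bool] (q(A)) and structure constants [c A B D] = C_{AB}^D,
   i.e. [T_A, T_B] = \sum_D C_{AB}^D T_D. *)

Definition is_Lie_superalgebra (R : comNzRingType) (X : finType)
  (grade : X -> bool) (c : X -> X -> X -> R) : Prop :=
  [/\ (forall A B D, c A B D != 0 -> grade D = addb (grade A) (grade B)),
      (forall A B D, c A B D = - ((-1) ^+ (grade A * grade B)%N * c B A D)) &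
      (forall A B E F,
         \sum_(D : X) c B E D * c A D F =
         \sum_(D : X) c A B D * c D E F
         + (-1) ^+ (grade A * grade B)%N * \sum_(D : X) c A E D * c B D F)].

Definition replace_at (X : Type) (n : nat) (A : {ffun 'I_n -> X}) (p : 'I_n) (B : X)
  : {ffun 'I_n -> X} := [ffun k => if k == p then B else A k].

Definition invariant_tensor (R : comNzRingType) (X : finType)
  (grade : X -> bool) (c : X -> X -> X -> R) (n : nat)
  (t : {ffun 'I_n -> X} -> R) : Prop :=
  forall (A0 : X) (A : {ffun 'I_n -> X}),
    \sum_(p < n)
       (-1) ^+ (grade A0 * \sum_(k < n | (k < p)%N) grade (A k))%N
       * \sum_(B : X) c A0 (A p) B * t (replace_at A p B) = 0.

(* n-selector: K_{a_1 ... a_n}^g = 1 if a_1 ... a_n = g, 0 otherwise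
   (for the empty list we set it to 0; it is never used with n = 0). *)
Definition selector (R : comNzRingType) (S : eqType) (mul : S -> S -> S)
  (s : seq S) (g : S) : R :=
  if s is x :: s' then ((foldl mul x s' == g) : nat)%:R else 0.

(* Resonant decomposition g = (+)_p V_p (V_p spanned by the basis vectors T_a
   with part a = p) and S = U_p S_p. *)
Definition resonant (Ig I S : finType) (R : comNzRingType) (mul : S -> S -> S)
  (part : Ig -> I) (c : Ig -> Ig -> Ig -> R) (Sp : I -> {set S}) : Prop :=
  exists i : I -> I -> {set I},
    forall p q : I,
      (forall a b d, part a = p -> part b = q -> c a b d != 0 -> part d \in i p q)
      /\ (forall x y r, x \in Sp p -> y \in Sp q -> r \in i p q -> mul x y \in Sp r).

Section Algebras.
Variables (R : comNzRingType) (Ig I S : finType) (mul : S -> S -> S)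
  (part : Ig -> I) (grade : Ig -> bool) (c : Ig -> Ig -> Ig -> R)
  (Sp : I -> {set S}).

(* Basis of the resonant subalgebra G_R: T_{(A,alpha)} with alpha in S_{part A}. *)
Definition GR_basis := {x : Ig * S | x.2 \in Sp (part x.1)}.
Definition GR_grade (X : GR_basis) : bool := grade (val X).1.
Definition GR_const (X Y Z : GR_basis) : R :=
  selector R mul [:: (val X).2; (val Y).2] (val Z).2 * c (val X).1 (val Y).1 (val Z).1.

(* Basis of the 0_S-forced algebra: T_{(A,i)} with lambda_i in S_{part A}, lambda_i <> 0_S. *)
Definition forced_basis (z : S) := {x : Ig * S | (x.2 \in Sp (part x.1)) && (x.2 != z)}.
Definition forced_grade (z : S) (X : forced_basis z) : bool := grade (val X).1.
Definition forced_const (z : S) (X Y Z : forced_basis z) : R :=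
  selector R mul [:: (val X).2; (val Y).2] (val Z).2 * c (val X).1 (val Y).1 (val Z).1.

End Algebras.

Arguments GR_basis : clear implicits.
Arguments GR_grade : clear implicits.
Arguments GR_const : clear implicits.
Arguments forced_basis : clear implicits.
Arguments forced_grade : clear implicits.
Arguments forced_const : clear implicits.

(* Main.v *)
Require Import Defs.
From mathcomp Require Import all_boot all_order all_algebra.
Import GRing.Theory.
Local Open Scope ring_scope.

Lemma sum_sig (R : comNzRingType) (T : finType) (P : pred T) (F : T -> R) :
  \sum_(B : {x : T | P x}) F (val B) = \sum_(x | P x) F x.
Proof.
rewrite (reindex_omap (val : {x : T | P x} -> T) insub) /=; last first.
  by move=> i Pi; rewrite insubT.
apply: eq_bigl => -[i Pi] /=; by rewrite insubT /= eqxx Pi.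
Qed.

Section Fold.
Variables (S : Type) (mul : S -> S -> S).
Hypotheses (mulA : associative mul) (mulC : commutative mul).

Lemma foldl_mulA a x s : foldl mul (mul a x) s = mul a (foldl mul x s).
Proof. by elim: s a x => //= y s IH a x; rewrite -mulA IH. Qed.
End Fold.

Lemma map_rep_id (S T : eqType) (mul : S -> S -> S) (f : T -> S) a p (l : seq T) :
  p \notin l -> map (fun k => if k == p then mul a (f k) else f k) l = map f l.
Proof.
move=> pl; apply/eq_in_map => k kl; case: eqP => // E; by rewrite -E kl in pl.
Qed.

Lemma foldl_rep (S T : eqType) (mul : S -> S -> S) (mulA : associative mul) (mulC : commutative mul)
  (f : T -> S) a p (l : seq T) x : uniq l -> p \in l ->
  foldl mul x (map (fun k => if k == p then mul a (f k) else f k) l) = mul a (foldl mul x (map f l)).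
Proof.
elim: l x => //= y l IH x /andP[yl ul]; rewrite in_cons.
have [E|ne] := eqVneq y p.
  move=> _; subst y; rewrite map_rep_id //.
  by rewrite -foldl_mulA // mulA (mulC x) -mulA.
rewrite /= => pl; by rewrite IH.
Qed.

Lemma sel_rep (R : comNzRingType) (S T : eqType) (mul : S -> S -> S) (mulA : associative mul) (mulC : commutative mul)
  (f : T -> S) a p (l : seq T) g : uniq l -> p \in l ->
  selector R mul (map (fun k => if k == p then mul a (f k) else f k) l) g = selector R mul (a :: map f l) g.
Proof.
case: l => //= y l /andP[yl ul]; rewrite in_cons /selector /=.
have [E|ne] := eqVneq y p.
  move=> _; subst y; rewrite map_rep_id //.
rewrite /= => pl.
by rewrite foldl_rep // foldl_mulA.
Qed.

Lemma foldl_z (S : eqType) (mul : S -> S -> S) z (hz : forall x, mul z x = z /\ mul x z = z) s x :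
  z \in x :: s -> foldl mul x s = z.
Proof.
elim: s x => [|y s IH] x; first by rewrite inE => /eqP.
rewrite /= !in_cons => H; apply: IH; rewrite in_cons.
case/orP: H => [/eqP <-|/orP[/eqP <-|->]]; last by rewrite orbT.
  by rewrite (hz y).1 eqxx.
by rewrite (hz x).2 eqxx.
Qed.

Lemma gen (R : comNzRingType) (Ig S : finType) (grade : Ig -> bool) (C : Ig -> Ig -> Ig -> R)
  (mul : S -> S -> S) (mulA : associative mul) (mulC : commutative mul)
  (n : nat) (t : {ffun 'I_n -> Ig} -> R) (P : pred (Ig * S)) (Q : pred S) (alpha : S -> R) :
 invariant_tensor grade C t ->
 (forall (A0 : {x : Ig * S | P x}) (A : {ffun 'I_n -> {x : Ig * S | P x}}) (p : 'I_n) b,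
    ~~ P (b, mul (val A0).2 (val (A p)).2) ->
    C (val A0).1 (val (A p)).1 b * \sum_(g | Q g) alpha g
       * selector R mul ((val A0).2 :: [seq (val (A k)).2 | k <- enum 'I_n]) g = 0) ->
 invariant_tensor (fun X : {x : Ig * S | P x} => grade (val X).1)
   (fun X Y Z : {x : Ig * S | P x} =>
      selector R mul [:: (val X).2; (val Y).2] (val Z).2 * C (val X).1 (val Y).1 (val Z).1)
   (fun T => \sum_(g | Q g) alpha g * selector R mul [seq (val (T k)).2 | k <- enum 'I_n] g
              * t [ffun k => (val (T k)).1]).
Proof.
move=> inv hyp A0 A.
set W := \sum_(g | Q g) alpha g * selector R mul ((val A0).2 :: [seq (val (A k)).2 | k <- enum 'I_n]) g.
set as_ := [ffun k => (val (A k)).1].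
have key : forall p : 'I_n,
  \sum_(B : {x : Ig * S | P x})
     selector R mul [:: (val A0).2; (val (A p)).2] (val B).2 * C (val A0).1 (val (A p)).1 (val B).1
     * (\sum_(g | Q g) alpha g * selector R mul [seq (val (replace_at A p B k)).2 | k <- enum 'I_n] g
              * t [ffun k => (val (replace_at A p B k)).1])
  = W * \sum_(b : Ig) C (val A0).1 (as_ p) b * t (replace_at as_ p b).
  move=> p.
  pose F (x : Ig * S) := selector R mul [:: (val A0).2; (val (A p)).2] x.2 * C (val A0).1 (val (A p)).1 x.1
     * (\sum_(g | Q g) alpha g * selector R mul [seq (if k == p then x.2 else (val (A k)).2) | k <- enum 'I_n] g
              * t (replace_at as_ p x.1)).
  transitivity (\sum_(B : {x : Ig * S | P x}) F (val B)).
    apply: eq_bigr => B _; rewrite /F; congr (_ * _); apply: eq_bigr => g _; congr (_ * _ * t _).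
      congr (selector _ _ _ _); apply: eq_map => k; rewrite /replace_at ffunE; by case: eqP.
    apply/ffunP => k; rewrite /replace_at !ffunE; by case: eqP.
  rewrite sum_sig.
  transitivity (\sum_(b : Ig) \sum_(β : S) (if P (b, β) then F (b, β) else 0)).
    by rewrite pair_bigA big_mkcond; apply: eq_bigr => -[b β].
  rewrite mulr_sumr; apply: eq_bigr => b _.
  rewrite (bigD1 (mul (val A0).2 (val (A p)).2)) //= big1 ?addr0; last first.
    move=> β ne; case: ifP => // _; rewrite /F /selector /= eq_sym (negbTE ne) mul0r mul0r //.
  have GW : \sum_(g | Q g) alpha g * selector R mul [seq (if k == p then mul (val A0).2 (val (A p)).2
      else (val (A k)).2) | k <- enum 'I_n] g * t (replace_at as_ p b) = W * t (replace_at as_ p b).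
    rewrite /W mulr_suml; apply: eq_bigr => g _; congr (alpha g * _ * _).
    have -> : [seq (if k == p then mul (val A0).2 (val (A p)).2 else (val (A k)).2) | k <- enum 'I_n]
       = [seq (if k == p then mul (val A0).2 (val (A k)).2 else (val (A k)).2) | k <- enum 'I_n].
      by apply: eq_map => k; case: eqP => // ->.
    by rewrite (sel_rep _ _ _ _ mulA mulC) ?enum_uniq ?mem_enum.
  rewrite /F /= GW /selector /= eqxx mul1r ffunE.
  case: ifP => HP; first by rewrite mulrCA.
  rewrite mulrCA mulrA hyp ?HP // mul0r //.
rewrite (eq_bigr (fun p : 'I_n => W * ((-1) ^+ (grade (val A0).1 * \sum_(k < n | (k < p)%N) grade (as_ k))%N
       * \sum_(b : Ig) C (val A0).1 (as_ p) b * t (replace_at as_ p b)))).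
  by rewrite -mulr_sumr inv mulr0.
move=> p _; rewrite mulrCA -key; congr (_ * _).
  congr ((-1) ^+ (_ * _)%N); apply: eq_bigr => k _; by rewrite ffunE.
Qed.

Lemma sel_z (R : comNzRingType) (S : eqType) (mul : S -> S -> S) z
  (hz : forall x, mul z x = z /\ mul x z = z) s j :
  z \in s -> j != z -> selector R mul s j = 0.
Proof.
case: s => // x s zs jz; rewrite /selector (foldl_z _ _ z hz) //.
by rewrite eq_sym (negbTE jz).
Qed.

Theorem mainTheorem6
  (R : fieldType) (Ig I S : finType)
  (grade : Ig -> bool) (C : Ig -> Ig -> Ig -> R)
  (part : Ig -> I) (mul : S -> S -> S) (Sp : I -> {set S})
  (n : nat) (t : {ffun 'I_n -> Ig} -> R) :
  is_Lie_superalgebra grade C ->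
  associative mul -> commutative mul ->
  \bigcup_(p : I) Sp p = [set: S] ->
  resonant mul part C Sp ->
  invariant_tensor grade C t ->
  (* (i) *)
  (forall alpha : S -> R,
     invariant_tensor (GR_grade Ig I S part grade Sp) (GR_const R Ig I S mul part C Sp)
       (fun T : {ffun 'I_n -> GR_basis Ig I S part Sp} =>
          \sum_(g : S) alpha g
            * selector R mul [seq (val (T k)).2 | k <- enum 'I_n] g
            * t [ffun k => (val (T k)).1]))
  /\
  (* (ii) *)
  (forall z : S, (forall x, mul z x = z /\ mul x z = z) ->
   forall alpha : S -> R,
     invariant_tensor (forced_grade Ig I S part grade Sp z)
       (forced_const R Ig I S mul part C Sp z)
       (fun T : {ffun 'I_n -> forced_basis Ig I S part Sp z} =>
          \sum_(j : S | j != z) alpha j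
            * selector R mul [seq (val (T k)).2 | k <- enum 'I_n] j
            * t [ffun k => (val (T k)).1])).
Proof.
move=> _ mulA mulC _ [i hi] inv.
have res : forall a0 a1 b (x y : S), x \in Sp (part a0) -> y \in Sp (part a1) ->
    mul x y \notin Sp (part b) -> C a0 a1 b = 0.
  move=> a0 a1 b x y hx hy hn; apply/eqP; apply: contraNT hn => HC.
  have [h1 h2] := hi (part a0) (part a1).
  exact: h2 hx hy (h1 _ _ _ erefl erefl HC).
split.
  move=> alpha.
  apply: (@gen R Ig S grade C mul mulA mulC n t (fun x => x.2 \in Sp (part x.1)) xpredT alpha inv).
  move=> A0 A p b HP; rewrite (res _ _ _ _ _ (valP A0) (valP (A p)) HP) mul0r //.
move=> z hz alpha.
apply: (@gen R Ig S grade C mul mulA mulC n t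
   (fun x => (x.2 \in Sp (part x.1)) && (x.2 != z)) (fun j => j != z) alpha inv).
move=> A0 A p b; rewrite negb_and negbK => /orP[HP|/eqP Ez].
  have /andP[h0 _] := valP A0; have /andP[h1 _] := valP (A p).
  by rewrite (res _ _ _ _ _ h0 h1 HP) mul0r.
rewrite big1 ?mulr0 // => j jz.
rewrite -(sel_rep _ _ _ _ mulA mulC (fun k => (val (A k)).2) (val A0).2 p) ?enum_uniq ?mem_enum //.
rewrite (sel_z _ _ _ z hz _ _ _ jz) ?mulr0 //.
apply/mapP; exists p; first by rewrite mem_enum.
by rewrite eqxx; apply/eqP; move: Ez => /= ->.
Qed.
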